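(* Let $p\ge1$, $\phi_1,\dots,\phi_p:\mathbb Z\to\mathbb C$, $v:\mathbb Z\to\mathbb C$, $s\in\mathbb Z$, and let $y:\{s-p+1,s-p+2,\dots\}\to\mathbb C$ satisfy $y_t=\sum_{l=1}^p\phi_l(t)y_{t-l}+v_t$ for all $t\ge s+1$. Then for all $t>s$, $$y_t=\sum_{m=1}^{p}\sum_{j=1}^{p-m+1}\phi_{m+j-1}(s+j)\,H(t,s+j)\,y_{s-m+1}+\sum_{j=1}^{t-s}H(t,s+j)\,v_{s+j}.$$
   Context: $\Gamma_t$ is the $p\times p$ companion matrix with first row $(\phi_1(t),\dots,\phi_p(t))$, entries $(i,i-1)$ equal to $1$ for $2\le i\le p$, other entries $0$. The Green's function is defined for integers $u$ and $t\ge u-p+1$ by: $H(t,u)$ is the $(1,1)$ entry of $\Gamma_t\Gamma_{t-1}\cdots\Gamma_{u+1}$ if $t>u$; $H(u,u)=1$; $H(t,u)=0$ if $u-p+1\le t<u$. *)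

(* Defs.v *)
From HB Require Import structures.
From mathcomp Require Import all_boot all_order all_algebra.
From mathcomp Require Import reals.
From mathcomp.real_closed Require Import complex.
Set Implicit Arguments. Unset Strict Implicit. Unset Printing Implicit Defensive.
Import Order.TTheory GRing.Theory Num.Theory.
Local Open Scope ring_scope.

(* Matrices are of size p.-1.+1, which equals p whenever p >= 1 (the paper's
   standing assumption); index 0 is the paper's index 1. *)

Definition companion (C : comRingType) (p : nat) (phi : nat -> int -> C)
  (t : int) : 'M[C]_(p.-1.+1) :=
  \matrix_(i, j) if (i == 0 :> nat) then phi j.+1 t
                 else if (i == j.+1 :> nat) then 1 else 0.

Fixpoint gprod (C : comRingType) (p : nat) (phi : nat -> int -> C)
  (u : int) (n : nat) : 'M[C]_(p.-1.+1) :=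
  match n with
  | 0 => 1%:M
  | n'.+1 => companion p phi (u + (n'.+1)%:Z) *m gprod p phi u n'
  end.

(* Green's function H(t,u): (1,1) entry of Gamma_t ... Gamma_{u+1} if t > u,
   1 if t = u, 0 if t < u (the paper only uses u-p+1 <= t < u there). *)
Definition green (C : comRingType) (p : nat) (phi : nat -> int -> C)
  (t u : int) : C :=
  if u < t then gprod p phi u `|t - u|%N ord0 ord0
  else if t == u then 1 else 0.

(* Main.v *)
Require Import Defs.
From HB Require Import structures.
From mathcomp Require Import all_boot all_order all_algebra.
From mathcomp Require Import reals.
From mathcomp.real_closed Require Import complex.
From mathcomp Require Import zify ring.
Import Order.TTheory GRing.Theory Num.Theory.
Local Open Scope ring_scope.
Set Warnings "-notation-overridden -ambiguous-paths -deprecated".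

Section G.
Variables (C : comRingType) (p : nat) (phi : nat -> int -> C).

Lemma green_lt t u : t < u -> green p phi t u = 0.
Proof. move=> h; rewrite /green; have -> : (u < t) = false by lia.
by have -> : (t == u) = false by lia. Qed.

Lemma green_eq t : green p phi t t = 1.
Proof. by rewrite /green ltxx eqxx. Qed.

Lemma gcol u n (j : 'I_(p.-1.+1)) :
  gprod p phi u n j ord0 = green p phi (u + n%:Z - (j : nat)%:Z) u.
Proof.
elim: n j => [|n IH] j /=.
  rewrite mxE /green; have -> : (u < u + 0%:Z - (j : nat)%:Z) = false by lia.
  case: j => [[|j] hj] /=; first by rewrite subr0 addr0 eqxx.
  by have -> : (u + 0%:Z - (j.+1)%:Z == u) = false by lia.
case: j => [[|j] hj].
  rewrite /green subr0 ifT; last by lia.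
  have -> : absz ((u + (n.+1)%:Z - u)%R : int) = n.+1 by lia.
  by have -> : Ordinal hj = ord0 by apply: val_inj.
rewrite mxE (bigD1 (Ordinal (ltnW hj) : 'I_(p.-1.+1))) //= big1.
  rewrite !mxE /= eqxx mul1r addr0 (IH (Ordinal (ltnW hj))) /=.
  congr (green _ _ _ _); lia.
move=> k hk; rewrite !mxE /=.
case: eqP => [[e]|_]; last by rewrite mul0r.
by move: hk; rewrite (_ : k = Ordinal (ltnW hj)) ?eqxx //; apply: val_inj.
Qed.

Lemma green_rec t u : u < t ->
  green p phi t u = \sum_(k < p.-1.+1) phi k.+1 t * green p phi (t - (k.+1)%:Z) u.
Proof.
move=> h; rewrite {1}/green h.
have [n hn] : exists n, absz ((t - u)%R : int) = n.+1 by exists (absz ((t-u)%R : int)).-1; lia.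
rewrite hn /= mxE; apply: eq_bigr => k _.
rewrite gcol !mxE /=; congr (_ * green _ _ _ _); [congr (phi _ _)|]; lia.
Qed.
End G.
Lemma reidx (C : nmodType) (F : nat -> C) j p : (0 < j)%N ->
  \sum_(1 <= l < p.+1 | (j <= l)%N) F l =
  \sum_(1 <= m < p.+1 | (m + j - 1 <= p)%N) F (m + j - 1)%N.
Proof.
move=> hj.
have -> : \sum_(1 <= m < p.+1 | (m + j - 1 <= p)%N) F (m + j - 1)%N =
   \sum_(0 <= i < p + j - j | (i + j <= p)%N) F (i + j)%N.
  rewrite addnK big_add1 /=; apply: eq_big => [i|i _].
    by congr (_ <= _)%N; lia.
  by congr F; lia.
rewrite -(big_addn 0 (p + j) j (fun l => (l <= p)%N) F) add0n.
rewrite [LHS](big_nat_widen _ _ (p + j).+1); last lia.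
rewrite [LHS](big_nat_widenl _ 0); last lia.
rewrite [RHS](big_nat_widen _ _ (p + j).+1); last lia.
rewrite [RHS](big_nat_widenl _ 0); last lia.
apply: eq_bigl => l; lia.
Qed.

Section Main.
Variables (R : realType) (p : nat) (hp : (1 <= p)%N)
  (phi : nat -> int -> R[i]) (v : int -> R[i]) (s : int) (y : int -> R[i])
  (hy : forall t : int, s + 1 <= t ->
          y t = \sum_(1 <= l < p.+1) phi l t * y (t - l%:Z) + v t).

Definition W (j : nat) : R[i] := v (s + j%:Z) +
  \sum_(1 <= l < p.+1 | (j <= l)%N) phi l (s + j%:Z) * y (s + j%:Z - l%:Z).

Definition S (t : int) (N : nat) : R[i] :=
  \sum_(1 <= j < N.+1) green p phi t (s + j%:Z) * W j.

Lemma S_le t N : t <= s -> S t N = 0.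
Proof.
move=> h; rewrite /S big_nat_cond big1 // => j /andP[/andP[h1 h2] _].
by rewrite green_lt ?mul0r //; lia.
Qed.

Lemma S_ext n N : (n <= N)%N -> S (s + n%:Z) N = S (s + n%:Z) n.
Proof.
move=> h; rewrite /S (big_cat_nat _ (n:=n.+1)) //=; try lia.
rewrite [X in _ + X]big_nat_cond [X in _ + X]big1 ?addr0 // => j /andP[/andP[h1 h2] _].
by rewrite green_lt ?mul0r //; lia.
Qed.

Lemma green_rec2 t u : u < t ->
  green p phi t u = \sum_(1 <= l < p.+1) phi l t * green p phi (t - l%:Z) u.
Proof.
move=> h; rewrite green_rec //.
by rewrite -(big_mkord xpredT (fun k => phi k.+1 t * green p phi (t - (k.+1)%:Z) u)) prednK // big_add1.
Qed.

Lemma key n : (0 < n)%N -> y (s + n%:Z) = S (s + n%:Z) n.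
Proof.
elim/ltn_ind: n => n IH hn.
rewrite hy; last lia.
transitivity (\sum_(1 <= l < p.+1) phi l (s + n%:Z) * S (s + n%:Z - l%:Z) n.-1 + W n).
  rewrite /W (big_mkcond (fun l => (n <= l)%N)) addrCA addrC; congr (_ + _).
  rewrite -big_split /=; apply: eq_big_nat => l /andP[hl1 hl2].
  case: (leqP n l) => hnl.
    by rewrite S_le ?mulr0 ?add0r //; lia.
  have e : s + n%:Z - l%:Z = s + (n - l)%N%:Z by lia.
  rewrite addr0 e IH; [|lia|lia].
  by rewrite (S_ext (n - l)%N n.-1) //; lia.
rewrite [RHS]/S [RHS]big_nat_recr //= green_eq mul1r; congr (_ + _).
transitivity (\sum_(1 <= j < n) \sum_(1 <= l < p.+1)
   phi l (s + n%:Z) * green p phi (s + n%:Z - l%:Z) (s + j%:Z) * W j); last first.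
  apply: eq_big_nat => j hj; rewrite (green_rec2 (s + n%:Z)) ?big_distrl //; lia.
rewrite exchange_big_nat; apply: eq_bigr => l _.
rewrite /S prednK // big_distrr; apply: eq_bigr => j _.
by rewrite /= mulrA.
Qed.
End Main.

Theorem mainTheorem13 (R : realType) (p : nat) (hp : (1 <= p)%N)
  (phi : nat -> int -> R[i]) (v : int -> R[i]) (s : int) (y : int -> R[i])
  (hy : forall t : int, s + 1 <= t ->
          y t = \sum_(1 <= l < p.+1) phi l t * y (t - l%:Z) + v t) :
  forall t : int, s < t ->
    y t = \sum_(1 <= m < p.+1) \sum_(1 <= j < (p - m + 1).+1)
              phi (m + j - 1)%N (s + j%:Z) * green p phi t (s + j%:Z)
                * y (s - m%:Z + 1)
          + \sum_(1 <= j < `|t - s|%N.+1) green p phi t (s + j%:Z) * v (s + j%:Z).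
Proof.
move=> t hst.
have [q [hq ht]] : exists q, (0 < q)%N /\ t = s + q%:Z.
  by exists (absz (t - s)); lia.
subst t.
rewrite (@key R p hp phi v s y hy q hq) /S.
have -> : absz ((s + q%:Z - s)%R : int) = q by lia.
under eq_bigr do rewrite /W mulrDr.
rewrite big_split /= addrC; congr (_ + _).
set N := (q + p)%N.
transitivity (\sum_(1 <= j < N.+1) \sum_(1 <= m < p.+1 | (m + j - 1 <= p)%N)
   phi (m + j - 1)%N (s + j%:Z) * green p phi (s + q%:Z) (s + j%:Z) * y (s - m%:Z + 1)).
  rewrite [LHS](big_nat_widen _ _ N.+1); last lia.
  rewrite [LHS]big_mkcond /=; apply: eq_big_nat => j /andP[hj1 hj2].
  case: (ltnP j q.+1) => hjq.
    rewrite big_distrr /= reidx //.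
    rewrite [LHS]big_nat_cond [RHS]big_nat_cond; apply: eq_bigr => m /andP[/andP[hm1 hm2] _].
    rewrite (_ : s + j%:Z - (m + j - 1)%N%:Z = s - m%:Z + 1); last lia.
    by rewrite mulrA [_ * phi _ _]mulrC.
  rewrite big1 // => m _; rewrite green_lt ?mulr0 ?mul0r //; lia.
under [LHS]eq_bigr do rewrite big_mkcond.
rewrite exchange_big_nat; apply: eq_big_nat => m /andP[hm1 hm2].
rewrite [RHS](big_nat_widen _ _ N.+1); last lia.
rewrite [RHS]big_mkcond; apply: eq_big_nat => j /andP[hj1 hj2] /=.
by have -> : (m + j - 1 <= p)%N = (j < (p - m + 1).+1)%N by lia.
Qed.
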